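(* Let $\Pi$, $y_n$, $\rho$, $\gamma$ be as in the context and $r>0$. The system of equations \[b_n=y_n-\frac1\gamma+\frac{\rho}{r\gamma}-\frac{1}{\gamma r}\sum_{n'=1}^N\pi_{nn'}e^{\gamma(b_n-b_{n'})},\quad n\in\{1,\dots,N\},\] has a unique solution $(b_1,\dots,b_N)\in\mathbb R^N$. The solution varies continuously with $r>0$, and $\min_n b_n\to\infty$ as $r$ decreases to zero.
   Context: $\Pi=(\pi_{nn'})$ is an $N\times N$ irreducible infinitesimal generator matrix (nonnegative off-diagonal entries, rows summing to zero, and for every nonempty proper subset $\mathcal M\subset\{1,\dots,N\}$ there are $n\in\mathcal M$, $n'\notin\mathcal M$ with $\pi_{nn'}\ne0$). $y_1,\dots,y_N$ are real numbers and $\rho,\gamma>0$. *)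

(* Defs.v *)
From HB Require Import structures.
From mathcomp Require Import all_boot all_order all_algebra.
From mathcomp Require Import all_classical all_reals all_analysis.
Set Implicit Arguments. Unset Strict Implicit. Unset Printing Implicit Defensive.
Import Order.TTheory GRing.Theory Num.Theory.
Local Open Scope ring_scope.

Definition is_generator (R : realType) (N : nat) (Pi : 'M[R]_N) : Prop :=
  (forall n n' : 'I_N, n != n' -> 0 <= Pi n n') /\
  (forall n : 'I_N, \sum_(n' < N) Pi n n' = 0).

Definition generator_irreducible (R : realType) (N : nat) (Pi : 'M[R]_N) : Prop :=
  forall M : {set 'I_N}, M != finset.set0 -> M != [set: 'I_N] ->
    exists n n' : 'I_N, [/\ n \in M, n' \notin M & Pi n n' != 0].

Definition solves_system (R : realType) (N : nat) (Pi : 'M[R]_N) (y : 'I_N -> R)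
    (rho gamma r : R) (b : 'I_N -> R) : Prop :=
  forall n : 'I_N,
    b n = y n - 1 / gamma + rho / (r * gamma)
          - 1 / (gamma * r) * \sum_(n' < N) Pi n n' * expR (gamma * (b n - b n')).

(* Main.v *)
Require Import Defs.
From HB Require Import structures.
From mathcomp Require Import all_boot all_order all_algebra.
From mathcomp Require Import all_classical all_reals all_analysis.
From mathcomp Require Import ring lra.
Import Order.TTheory GRing.Theory Num.Theory.
Import numFieldNormedType.Exports.
Local Open Scope classical_set_scope.
Local Open Scope ring_scope.
Set Implicit Arguments. Unset Strict Implicit. Unset Printing Implicit Defensive.

Definition HH (R : realType) (N : nat) (Pi : 'M[R]_N) (g : R) (b : 'I_N -> R) (n : 'I_N) :=
  \sum_(n' < N) Pi n n' * expR (g * (b n - b n')).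

Definition PP (R : realType) (N : nat) (Pi : 'M[R]_N) (g k : R) (A b : 'I_N -> R) (n : 'I_N) :=
  b n - A n + k * HH Pi g b n.

Lemma expR_sub1 (R : realType) (s : R) : expR s - 1 <= s * expR s.
Proof.
have h := expR_ge1Dx (- s).
have e : expR (- s) * expR s = 1 by rewrite -expRD addNr expR0.
have hs := expR_gt0 s.
have : (1 - s) * expR s <= expR (-s) * expR s by rewrite ler_pM2r.
rewrite e; nra.
Qed.

Lemma HH_mono (R : realType) (N : nat) (Pi : 'M[R]_N) (g : R) (b c : 'I_N -> R) n :
  (forall n n' : 'I_N, n != n' -> 0 <= Pi n n') -> 0 <= g ->
  (forall n', c n - c n' <= b n - b n') -> HH Pi g c n <= HH Pi g b n.
Proof.
move=> hP hg hbc; rewrite /HH; apply: ler_sum => n' _.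
have [->|ne] := eqVneq n n'; first by rewrite !subrr.
apply: ler_wpM2l; first exact: hP.
rewrite ler_expR; apply: ler_wpM2l => //.
Qed.

Lemma HH_lip (R : realType) (N : nat) (Pi : 'M[R]_N) (g W t : R) (b c : 'I_N -> R) n :
  (forall n n' : 'I_N, n != n' -> 0 <= Pi n n') -> 0 <= g -> 0 <= t -> t <= 1 ->
  (forall n', c n - c n' <= b n - b n' + t) -> (forall n', b n - b n' <= W) ->
  HH Pi g c n - HH Pi g b n <=
    ((\sum_(n' < N) `|Pi n n'|) * expR (g * W) * g * expR g) * t.
Proof.
move=> hP hg ht0 ht1 hbc hW; rewrite /HH -sumrB -!mulrA mulr_suml; apply: ler_sum => n' _.
have [<-|ne] := eqVneq n n'.
  rewrite !subrr; apply: mulr_ge0 => //; repeat (apply: mulr_ge0 => //); try apply/ltW/expR_gt0.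
have hp := hP _ _ ne; rewrite ger0_norm // -mulrBr; apply: ler_wpM2l => //.
set x := b n - b n'.
have h1 : expR (g * (c n - c n')) <= expR (g * (x + t)) by rewrite ler_expR; apply: ler_wpM2l => //; exact: hbc.
have h2 : expR (g * (x + t)) = expR (g * x) * expR (g * t) by rewrite -expRD mulrDr.
have h3 := expR_sub1 (g * t).
have h4 : expR (g * x) <= expR (g * W) by rewrite ler_expR; apply: ler_wpM2l => //; exact: hW.
have h5 : expR (g * t) <= expR g by rewrite ler_expR; nra.
have e0 := expR_gt0 (g * x). have e1 := expR_gt0 (g * t).
have e2 := expR_gt0 (g * W).
have : expR (g * (c n - c n')) - expR (g * x) <= expR (g * x) * ((g * t) * expR (g * t)).
  rewrite h2 in h1; nra.
move=> h6; apply: (le_trans h6).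
have gt0 : 0 <= g * t by nra.
have : (g * t) * expR (g * t) <= (g * t) * expR g by rewrite ler_wpM2l.
move=> h7.
have : expR (g * x) * (g * t * expR (g * t)) <= expR (g * W) * (g * t * expR g).
  apply: ler_pM; [exact: ltW | nra | exact: h4 | exact: h7].
move=> h8; apply: (le_trans h8); rewrite le_eqVlt; apply/orP; left; apply/eqP; ring.
Qed.

Lemma PP_cmp (R : realType) (N : nat) (Pi : 'M[R]_N) (g k : R) (A b c : 'I_N -> R) m :
  (forall n n' : 'I_N, n != n' -> 0 <= Pi n n') -> 0 <= g -> 0 <= k ->
  exists n, b m - c m <= PP Pi g k A b n - PP Pi g k A c n.
Proof.
move=> hP hg hk.
case: (@arg_maxP _ R _ m xpredT (fun i => b i - c i) isT) => n _ hn.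
exists n; rewrite /PP.
have hH : HH Pi g c n <= HH Pi g b n.
  apply: HH_mono => // n'; have : b n' - c n' <= b n - c n := hn n' isT. lra.
have : b m - c m <= b n - c n := hn m isT.
have : k * HH Pi g c n <= k * HH Pi g b n by apply: ler_wpM2l.
lra.
Qed.

Lemma PP_const (R : realType) (N : nat) (Pi : 'M[R]_N) (g k K : R) (A : 'I_N -> R) n :
  (forall n, \sum_(n' < N) Pi n n' = 0) ->
  PP Pi g k A (fun _ => K) n = K - A n.
Proof.
move=> hr; rewrite /PP /HH.
under eq_bigr do rewrite subrr mulr0 expR0 mulr1.
by rewrite hr mulr0 addr0.
Qed.

Lemma PP_exists (R : realType) (N : nat) (Pi : 'M[R]_N) (g k : R) (A : 'I_N -> R) :
  (forall n n' : 'I_N, n != n' -> 0 <= Pi n n') ->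
  (forall n, \sum_(n' < N) Pi n n' = 0) -> 0 <= g -> 0 <= k ->
  exists b, forall n, PP Pi g k A b n = 0.
Proof.
move=> hP hr hg hk.
pose Khi : R := \sum_i `|A i|.
pose Klo : R := - Khi.
have hA i : Klo <= A i <= Khi.
  rewrite -ler_norml /Khi (bigD1 i) //= lerDl; apply: sumr_ge0 => j _; exact: normr_ge0.
have hKhi : 0 <= Khi by apply: sumr_ge0 => j _; exact: normr_ge0.
set S := [set b : 'I_N -> R | (forall i, Klo <= b i) /\ (forall i, PP Pi g k A b i <= 0)].
have hub b : S b -> forall i, b i <= Khi.
  move=> [_ hb] i; have [n hn] := PP_cmp A b (fun _ => Khi) i hP hg hk.
  rewrite PP_const // in hn; have := hb n; have := hA n; lra.
have hSlo : S (fun _ => Klo).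
  split=> // i; rewrite PP_const //; have := hA i; lra.
set E := fun i => [set x | exists2 b, S b & b i = x].
have hE i : has_sup (E i).
  split; first by exists Klo; exists (fun _ => Klo).
  by exists Khi => x [b Sb <-]; exact: hub.
set bs := fun i => sup (E i).
have hbs_ge b i : S b -> b i <= bs i.
  by move=> Sb; apply: (sup_upper_bound (hE i)); exists b.
have hbs_lo i : Klo <= bs i by exact: (hbs_ge _ i hSlo).
have hbs_hi i : bs i <= Khi.
  by apply: ge_sup; [case: (hE i) | move=> x [b Sb <-]; exact: hub].
set L := fun n => (\sum_(n' < N) `|Pi n n'|) * expR (g * (Khi - Klo)) * g * expR g.
have hL n : 0 <= L n.
  rewrite /L; repeat apply: mulr_ge0 => //; try apply/ltW/expR_gt0.
  by apply: sumr_ge0 => j _; exact: normr_ge0.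
have step1 n : PP Pi g k A bs n <= 0.
  rewrite leNgt; apply/negP => hp.
  set p := PP Pi g k A bs n in hp.
  set C := 1 + k * L n.
  have hC : 0 < C by rewrite /C; have := hL n; nra.
  have hCp : 0 < C + p by lra.
  set t := p / (C + p).
  have ht0 : 0 < t by rewrite /t divr_gt0.
  have ht1 : t <= 1 by rewrite /t ler_pdivrMr //; lra.
  have hCt : C * t < p.
    rewrite /t mulrA ltr_pdivrMr //; nra.
  have [x [b Sb <-] hx] := sup_adherent ht0 (hE n).
  have hlip := @HH_lip R N Pi g (Khi - Klo) t b bs n hP hg (ltW ht0) ht1.
  have h1 : HH Pi g bs n - HH Pi g b n <= L n * t.
    apply: hlip => n'.
      have := hbs_ge b n' Sb; rewrite /bs in hx *; lra.
    have := hub b Sb n; have := Sb.1 n'; lra.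
  have h2 : k * (HH Pi g bs n - HH Pi g b n) <= k * (L n * t) by apply: ler_wpM2l.
  have h3 := Sb.2 n.
  move: hp h3 h2 hCt hx; rewrite /p /PP /C /bs; nra.
have step2 n : 0 <= PP Pi g k A bs n.
  rewrite leNgt; apply/negP => hq.
  set q := - PP Pi g k A bs n.
  have hq' : 0 < q by rewrite /q oppr_gt0.
  set C := 1 + k * L n.
  have hC : 0 < C by rewrite /C; have := hL n; nra.
  have hCp : 0 < C + q by lra.
  set t := q / (C + q).
  have ht0 : 0 < t by rewrite /t divr_gt0.
  have ht1 : t <= 1 by rewrite /t ler_pdivrMr //; lra.
  have hCt : C * t < q.
    rewrite /t mulrA ltr_pdivrMr //; nra.
  set b' := fun i => if i == n then bs n + t else bs i.
  have hb'ge i : bs i <= b' i.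
    by rewrite /b'; case: eqP => [->|_] //; lra.
  have hb'n : b' n = bs n + t by rewrite /b' eqxx.
  have Sb' : S b'.
    split.
      move=> i; have := hb'ge i; have := hbs_lo i; lra.
    move=> m; have [->|nm] := eqVneq m n.
      have hlip := @HH_lip R N Pi g (Khi - Klo) t bs b' n hP hg (ltW ht0) ht1.
      have h1 : HH Pi g b' n - HH Pi g bs n <= L n * t.
        apply: hlip => n'.
          have := hb'ge n'; rewrite hb'n; lra.
        have := hbs_hi n; have := hbs_lo n'; lra.
      have h2 : k * (HH Pi g b' n - HH Pi g bs n) <= k * (L n * t) by apply: ler_wpM2l.
      move: hq h2 hCt; rewrite /q /PP /C hb'n; nra.
    have hbm : b' m = bs m by rewrite /b' (negbTE nm).
    have hH : HH Pi g b' m <= HH Pi g bs m.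
      apply: HH_mono => // n'; rewrite hbm; have := hb'ge n'; lra.
    have h2 : k * HH Pi g b' m <= k * HH Pi g bs m by apply: ler_wpM2l.
    have := step1 m; move: h2; rewrite /PP hbm; lra.
  have := hbs_ge b' n Sb'; rewrite hb'n; lra.
by exists bs => n; apply/eqP; rewrite eq_le step1 step2.
Qed.

Lemma solves_iff (R : realType) (N : nat) (Pi : 'M[R]_N) (y : 'I_N -> R) (rho gamma r : R) b :
  solves_system Pi y rho gamma r b <->
  forall n, PP Pi gamma (1 / (gamma * r)) (fun i => y i - 1 / gamma + rho / (r * gamma)) b n = 0.
Proof.
rewrite /solves_system /PP /HH; split=> h n; have := h n; lra.
Qed.

Theorem lemma2 (R : realType) (N : nat) (Pi : 'M[R]_N) (y : 'I_N -> R)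
    (rho gamma : R) :
  is_generator Pi -> generator_irreducible Pi -> 0 < rho -> 0 < gamma ->
  exists b : R -> 'I_N -> R,
    (* unique solution for each r > 0 *)
    (forall r : R, 0 < r ->
       solves_system Pi y rho gamma r (b r) /\
       (forall c : 'I_N -> R, solves_system Pi y rho gamma r c ->
          forall n, c n = b r n)) /\
    (* continuity in r on (0, +oo) (componentwise = in R^N) *)
    (forall (r : R) (n : 'I_N), 0 < r -> (b s n @[s --> r] --> b r n)) /\
    (* min_n b_n -> +oo as r decreases to 0 *)
    (forall M : R, exists2 delta : R, 0 < delta &
       forall r : R, 0 < r -> r < delta -> forall n : 'I_N, M < b r n).
Proof.
move=> [hP hr] _ hrho hgam.
pose k (r : R) := 1 / (gamma * r).
pose A (r : R) := fun i => y i - 1 / gamma + rho / (r * gamma).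
have hg : 0 <= gamma by exact: ltW.
have hk r : 0 < r -> 0 <= k r.
  move=> r0; rewrite /k; apply: divr_ge0 => //; apply: mulr_ge0 => //; exact: ltW.
have hex r : exists b, 0 < r -> solves_system Pi y rho gamma r b.
  have [r0|r0] := boolP (0 < r).
    have [b hb] := PP_exists (A r) hP hr hg (hk r r0).
    by exists b => _; apply/solves_iff.
  by exists (fun _ => 0).
have [f hf] := choice hex.
have hfs r : 0 < r -> forall n, PP Pi gamma (k r) (A r) (f r) n = 0.
  by move=> r0; apply/solves_iff; exact: hf.
exists f; split; [|split].
- move=> r r0; split; first exact: hf.
  move=> c /solves_iff hc n.
  have [i1 h1] := PP_cmp (A r) c (f r) n hP hg (hk r r0).
  have [i2 h2] := PP_cmp (A r) (f r) c n hP hg (hk r r0).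
  move: h1 h2; rewrite hc hfs // hc hfs //; lra.
- move=> r n r0.
  pose D i := f r i - y i + 1 / gamma.
  pose C := \sum_i `|D i|.
  have hC : 0 <= C by apply: sumr_ge0 => i _; exact: normr_ge0.
  have hDC i : `|D i| <= C.
    by rewrite /C (bigD1 i) //= lerDl; apply: sumr_ge0 => j _; exact: normr_ge0.
  have hPs s : 0 < s -> forall i,
      PP Pi gamma (k s) (A s) (f r) i = D i * (1 - r / s).
    move=> s0 i.
    have e0 := hfs r r0 i.
    move: e0; rewrite /PP /D /k /A.
    set H := HH _ _ _ _.
    have ek : 1 / (gamma * s) = (r / s) * (1 / (gamma * r)).
      by field; apply/and3P; split; rewrite gt_eqF.
    rewrite ek => e0.
    have eH : 1 / (gamma * r) * H = y i - 1 / gamma + rho / (r * gamma) - f r i by lra.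
    rewrite -mulrA eH.
    by field; apply/and3P; split; rewrite gt_eqF.
  have hbound s : 0 < s -> `|f r n - f s n| <= C * `|1 - r / s|.
    move=> s0.
    have [i1 h1] := PP_cmp (A s) (f r) (f s) n hP hg (hk s s0).
    have [i2 h2] := PP_cmp (A s) (f s) (f r) n hP hg (hk s s0).
    rewrite hfs // hPs // in h1; rewrite hfs // hPs // in h2.
    have a1 : D i1 * (1 - r / s) <= C * `|1 - r / s|.
      apply: (le_trans (ler_norm _)); rewrite normrM; apply: ler_wpM2r => //.
    have a2 : - (D i2 * (1 - r / s)) <= C * `|1 - r / s|.
      apply: (le_trans (ler_norm _)); rewrite normrN normrM; apply: ler_wpM2r => //.
    rewrite ler_norml; apply/andP; split; lra.
  apply/cvgrPdist_lt => e e0.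
  apply/nbhs_ballP.
  have hdel : 0 < Num.min (r / 2) (e * r / (2 * (C + 1))).
    rewrite lt_min; apply/andP; split; first by rewrite divr_gt0.
    by rewrite divr_gt0 ?mulr_gt0 //; lra.
  exists (Num.min (r / 2) (e * r / (2 * (C + 1)))) => // s.
  move=> hs; move: hs; rewrite /ball_ /= lt_min => /andP [u1 u2].
  set u := `|r - s| in u1 u2.
  have hs : r / 2 < s.
    move: u1; rewrite /u ltr_norml => /andP [_ ?]; lra.
  have s0 : 0 < s by lra.
  have eu : `|1 - r / s| = u / s.
    have -> : 1 - r / s = (s - r) / s by field; rewrite gt_eqF.
    by rewrite normf_div distrC (gtr0_norm s0).
  apply: (le_lt_trans (hbound s s0)); rewrite eu mulrA ltr_pdivrMr //.
  have hC1 : 0 < 2 * (C + 1) by lra.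
  move: u2; rewrite ltr_pdivlMr // => u2.
  have hu : 0 <= u by exact: normr_ge0.
  nra.
- move=> M.
  pose D := 1 + \sum_i `|M - y i + 1 / gamma|.
  have hD0 : 0 <= \sum_i `|M - y i + 1 / gamma| by apply: sumr_ge0 => i _; exact: normr_ge0.
  have hD i : M - y i + 1 / gamma < D.
    apply: (le_lt_trans (ler_norm _)).
    rewrite /D (bigD1 i) //=.
    have : 0 <= \sum_(j | j != i) `|M - y j + 1 / gamma| by apply: sumr_ge0 => j _; exact: normr_ge0.
    lra.
  have hDp : 0 < D by rewrite /D; lra.
  exists (rho / (gamma * D)); first by rewrite divr_gt0 // mulr_gt0.
  move=> r r0 rd n.
  have [i hi] := PP_cmp (A r) (fun _ => 0) (f r) n hP hg (hk r r0).
  rewrite PP_const // hfs // /A in hi.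
  have hrg : 0 < r * gamma by rewrite mulr_gt0.
  have : D < rho / (r * gamma).
    rewrite ltr_pdivlMr //.
    move: rd; rewrite ltr_pdivlMr ?mulr_gt0 //; lra.
  have := hD i; lra.
Qed.
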